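(* Let $X$ be a real Hilbert space and let $U,V,W$ be closed linear subspaces of $X$, with $Z := U\cap V\cap W$. Define the linear operator $M\colon X\times X\to X\times X\times X$ by \[ M(x,y) = \Big(P_Ux,\; P_VP_Ux+P_Vy,\; P_WP_Ux + P_WP_VP_Ux-P_Wx +P_WP_Vy-P_Wy\Big), \] and, writing $Q_i\colon X^3\to X$ for the projection onto the $i$-th coordinate, define the Ryu operator $T\colon X^2\to X^2$ by \[ T(z) = z + \big((Q_3-Q_1)Mz,\,(Q_3-Q_2)Mz\big). \] Let $0<\lambda<1$ and $(x_0,y_0)\in X\times X$, and generate $(x_k,y_k)_{k\in\mathbb N}$ via $(x_{k+1},y_{k+1}) = (1-\lambda)(x_k,y_k)+\lambda T(x_k,y_k)$. Then \[ M(x_k,y_k)\to \big(P_Z(x_0),P_Z(x_0),P_Z(x_0)\big) \] (in norm); in particular $P_U(x_k)\to P_Z(x_0)$.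
   Context: $P_S$ denotes the orthogonal projection onto a closed linear subspace $S$. The operator $M$ is the specialization of Ryu's splitting map $(x,y)\mapsto (J_A x, J_B(J_Ax+y), J_C(J_Ax - x + J_B(J_Ax+y)-y))$ to $A=N_U$, $B=N_V$, $C=N_W$ (normal cone operators), whose resolvents are $P_U,P_V,P_W$. *)

(* Defs.v *)
From HB Require Import structures.
From mathcomp Require Import all_boot all_order all_algebra.
From mathcomp Require Import all_classical all_reals all_analysis.
Set Implicit Arguments. Unset Strict Implicit. Unset Printing Implicit Defensive.
Import Order.TTheory GRing.Theory Num.Theory.
Import numFieldNormedType.Exports.
Local Open Scope classical_set_scope.
Local Open Scope ring_scope.

Definition inner_product (R : realType) (X : normedModType R)
  (ip : X -> X -> R) : Prop :=
  [/\ (forall x y, ip x y = ip y x),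
      (forall a x y z, ip (a *: x + y) z = a * ip x z + ip y z) &
      (forall x, `|x| ^+ 2 = ip x x)].

Definition closed_subspace (R : realType) (X : normedModType R) (S : set X) :=
  [/\ closed S, S 0 & forall a x y, S x -> S y -> S (a *: x + y)].

Definition orth_proj (R : realType) (X : normedModType R)
  (ip : X -> X -> R) (S : set X) (P : X -> X) :=
  forall x, S (P x) /\ forall s, S s -> ip (x - P x) s = 0.

(* The operator M of Ryu's splitting specialised to normal cones *)
Definition ryuM (R : realType) (X : normedModType R) (PU PV PW : X -> X)
  (z : X * X) : X * X * X :=
  let x := z.1 in let y := z.2 in
  (PU x, PV (PU x) + PV y,
   PW (PU x) + PW (PV (PU x)) - PW x + PW (PV y) - PW y).

Definition ryuT (R : realType) (X : normedModType R) (PU PV PW : X -> X)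
  (z : X * X) : X * X :=
  let m := ryuM PU PV PW z in
  (z.1 + (m.2 - m.1.1), z.2 + (m.2 - m.1.2)).

Fixpoint ryu_seq (R : realType) (X : normedModType R) (PU PV PW : X -> X)
  (l : R) (z0 : X * X) (k : nat) : X * X :=
  match k with
  | 0 => z0
  | k'.+1 => let z := ryu_seq PU PV PW l z0 k' in
             let t := ryuT PU PV PW z in
             ((1 - l) *: z.1 + l *: t.1, (1 - l) *: z.2 + l *: t.2)
  end.

(* Main.v *)
Require Import Defs.
From HB Require Import structures.
From mathcomp Require Import all_boot all_order all_algebra.
From mathcomp Require Import all_classical all_reals all_analysis.
From mathcomp Require Import ring lra.
Import Order.TTheory GRing.Theory Num.Theory.
Import numFieldNormedType.Exports.
Set Implicit Arguments. Unset Strict Implicit.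
Local Open Scope classical_set_scope.
Local Open Scope ring_scope.

Module P1.
Lemma ev_ex (P : nat -> Prop): (\forall n \near \oo, P n) <-> exists N, forall n, (N <= n)%N -> P n.
Proof.
split.
 move=> [N _ HN]. exists N => n Hn. exact: HN.
move=> [N HN]. exists N => //.
Qed.

Lemma cvg_ex_e (R : realType) (X : normedModType R) (u : nat -> X) l :
  u @ \oo --> l <-> forall e : R, 0 < e -> exists N, forall n, (N <= n)%N -> `|u n - l| < e.
Proof.
rewrite cvgrPdist_lt; split => H e he.
  by have /ev_ex [N HN] := H e he; exists N => n /HN; rewrite distrC.
by apply/ev_ex; have [N HN] := H e he; exists N => n /HN; rewrite distrC.
Qed.

Lemma complete_seq (R : realType) (X : completeNormedModType R) (u : nat -> X) :
  (forall e : R, 0 < e -> exists N, forall n, (N <= n)%N -> `|u n - u N| < e) ->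
  exists l : X, u @ \oo --> l.
Proof.
move=> H.
have : cauchy (u @ \oo).
  apply: cauchy_exP => e he.
  have [N HN] := H e he. exists (u N). apply/ev_ex. exists N => n /HN.
  by rewrite -ball_normE /= distrC.
move/cauchy_cvg. move/cvg_ex => [l Hl]. by exists l.
Qed.

Definition ivn (R : realType) (n : nat) : R := (n.+1%:R)^-1.
Lemma ivn_gt0 (R : realType) n : 0 < ivn R n.
Proof. by rewrite /ivn invr_gt0. Qed.

Lemma small_inv (R : realType) (e : R) : 0 < e ->
  exists N, forall n, (N <= n)%N -> ivn R n < e.
Proof.
rewrite /ivn; move=> he; exists (Num.Def.truncn e^-1) => n Hn.
have h1 := truncnS_gt e^-1.
have h2 : (Num.Def.truncn e^-1).+1%:R <= n.+1%:R :> R by rewrite ler_nat ltnS.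
have h3 : e^-1 < n.+1%:R by apply: lt_le_trans h2.
rewrite -(invrK e) ltf_pV2 ?posrE ?invr_gt0 //.
Qed.

Section Hilb.
Variables (R : realType) (X : completeNormedModType R) (ip : X -> X -> R).
Hypothesis hip : inner_product ip.

Lemma ipC x y : ip x y = ip y x.
Proof. by case: hip. Qed.
Lemma ipDl x y z : ip (x + y) z = ip x z + ip y z.
Proof. case: hip => _ h _. have := h 1 x y z. rewrite scale1r mul1r. by []. Qed.
Lemma ip0l z : ip 0 z = 0.
Proof. have h := ipDl 0 0 z; rewrite addr0 in h; lra. Qed.
Lemma ipZl a x z : ip (a *: x) z = a * ip x z.
Proof. by case: hip => _ h _; rewrite -[a *: x]addr0 h ip0l addr0. Qed.
Lemma ipNl x z : ip (- x) z = - ip x z.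
Proof. by rewrite -scaleN1r ipZl mulN1r. Qed.
Lemma ipBl x y z : ip (x - y) z = ip x z - ip y z.
Proof. by rewrite ipDl ipNl. Qed.
Lemma ipDr x y z : ip z (x + y) = ip z x + ip z y.
Proof. by rewrite ipC ipDl ![ip _ z]ipC. Qed.
Lemma ip0r z : ip z 0 = 0.
Proof. by rewrite ipC ip0l. Qed.
Lemma ipZr a x z : ip z (a *: x) = a * ip z x.
Proof. by rewrite ipC ipZl ipC. Qed.
Lemma ipNr x z : ip z (- x) = - ip z x.
Proof. by rewrite ipC ipNl ipC. Qed.
Lemma ipBr x y z : ip z (x - y) = ip z x - ip z y.
Proof. by rewrite ipDr ipNr. Qed.
Lemma ipn x : ip x x = `|x| ^+ 2.
Proof. by case: hip. Qed.
Lemma ip_ge0 x : 0 <= ip x x.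
Proof. by rewrite ipn sqr_ge0. Qed.
Lemma ip_eq0 x : ip x x = 0 -> x = 0.
Proof. by rewrite ipn => /eqP; rewrite sqrf_eq0 normr_eq0 => /eqP. Qed.
Lemma ip_le0 x : ip x x <= 0 -> x = 0.
Proof. by move=> h; apply: ip_eq0; apply/eqP; rewrite eq_le h ip_ge0. Qed.

Lemma ipCS x y : ip x y <= `|x| * `|y|.
Proof.
have h1 := ler_normD x y.
have h2 : `|x + y| ^+ 2 <= (`|x| + `|y|) ^+ 2.
  by rewrite ler_sqr ?nnegrE ?addr_ge0.
have : ip (x + y) (x + y) = ip x x + 2 * ip x y + ip y y.
  by rewrite !ipDl !ipDr (ipC y x); ring.
rewrite !ipn => e. nra.
Qed.
Lemma ipCS2 x y : `|ip x y| <= `|x| * `|y|.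
Proof.
rewrite ler_norml ipCS andbT; have := ipCS (- x) y.
by rewrite ipNl normrN; lra.
Qed.

Definition ipE := (ipDl, ipDr, ipBl, ipBr, ipNl, ipNr, ipZl, ipZr, ip0l, ip0r).

Lemma ip_ext u v : (forall t, ip u t = ip v t) -> u = v.
Proof.
move=> h; apply/eqP; rewrite -subr_eq0; apply/eqP; apply: ip_eq0.
by rewrite ipBl !h subrr.
Qed.

Section Proj.
Variables (S : set X) (P : X -> X).
Hypothesis hS : closed_subspace S.
Hypothesis hP : orth_proj ip S P.

Lemma S0 : S 0. Proof. by case: hS. Qed.
Lemma SL a x y : S x -> S y -> S (a *: x + y). Proof. by case: hS => _ _; apply. Qed.
Lemma SD x y : S x -> S y -> S (x + y). Proof. by move=> *; rewrite -[x]scale1r; apply: SL. Qed.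
Lemma SZ a x : S x -> S (a *: x). Proof. by move=> *; rewrite -[_ *: _]addr0; apply: SL => //; apply: S0. Qed.
Lemma SN x : S x -> S (- x). Proof. by move=> *; rewrite -scaleN1r; apply: SZ. Qed.
Lemma SB x y : S x -> S y -> S (x - y). Proof. by move=> *; apply: SD => //; apply: SN. Qed.
Lemma Pin x : S (P x). Proof. by case: (hP x). Qed.
Lemma Porth x t : S t -> ip (x - P x) t = 0. Proof. by case: (hP x) => _; apply. Qed.

Lemma Puniq x s : S s -> (forall t, S t -> ip (x - s) t = 0) -> P x = s.
Proof.
move=> Ss h; apply/eqP; rewrite -subr_eq0; apply/eqP; apply: ip_eq0.
have Sd : S (P x - s) by apply: SB => //; apply: Pin.
have -> : ip (P x - s) (P x - s) = ip (x - s) (P x - s) - ip (x - P x) (P x - s).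
  by rewrite -ipBl; congr ip; apply: ip_ext => t; rewrite !ipE; lra.
by rewrite h // Porth // subrr.
Qed.

Lemma Pid s : S s -> P s = s.
Proof. by move=> Ss; apply: Puniq => // t _; rewrite subrr ip0l. Qed.

Lemma PL a x y : P (a *: x + y) = a *: P x + P y.
Proof.
apply: Puniq; first by apply: SL; apply: Pin.
move=> t St.
have -> : a *: x + y - (a *: P x + P y) = a *: (x - P x) + (y - P y).
  by rewrite scalerBr opprD addrACA.
by rewrite ipDl ipZl !Porth // mulr0 addr0.
Qed.
Lemma PD x y : P (x + y) = P x + P y.
Proof. by rewrite -[x]scale1r PL !scale1r. Qed.
Lemma P0 : P 0 = 0.
Proof. by apply: Pid; apply: S0. Qed.
Lemma PSc a x : P (a *: x) = a *: P x.
Proof. by rewrite -[a *: x]addr0 PL P0 addr0. Qed.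
Lemma PN x : P (- x) = - P x.
Proof. by rewrite -scaleN1r PSc scaleN1r. Qed.
Lemma PB x y : P (x - y) = P x - P y.
Proof. by rewrite PD PN. Qed.

Lemma Pnorm2 x : ip (P x) (P x) <= ip x x.
Proof.
have e : ip x x = ip (P x) (P x) + ip (x - P x) (x - P x).
  have h := Porth x (Pin x).
  have hc := ipC (P x) x.
  rewrite !ipE in h *. lra.
by rewrite e lerDl ip_ge0.
Qed.
Lemma Pnorm x : `|P x| <= `|x|.
Proof.
have := Pnorm2 x; rewrite !ipn => h.
by rewrite -ler_sqr ?nnegrE.
Qed.

Lemma Pself x y : ip (P x) y = ip x (P y).
Proof.
have h1 := Porth x (Pin y). have h2 := Porth y (Pin x).
rewrite ipBl in h1; rewrite ipBl in h2.
rewrite (ipC (P x) y). rewrite (ipC (P x) (P y)) in h1. lra.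
Qed.

End Proj.

Lemma Psub (S1 S2 : set X) (P1 P2 : X -> X) :
  closed_subspace S1 -> orth_proj ip S1 P1 ->
  closed_subspace S2 -> orth_proj ip S2 P2 ->
  (forall t, S2 t -> S1 t) -> forall x, P2 (P1 x) = P2 x.
Proof.
move=> h1 o1 h2 o2 sub x.
have -> : P1 x = x - (x - P1 x) by rewrite opprB addrC subrK.
rewrite (PB h2 o2); apply/eqP; rewrite subr_eq addrC -subr_eq subrr eq_sym; apply/eqP.
apply: (Puniq h2 o2); first exact: (S0 h2).
by move=> t St; rewrite subr0; apply: (Porth o1 x); apply: sub.
Qed.

End Hilb.

End P1.
Import P1.

Module P2.
Lemma inf_facts (R : realType) (E : set R) : (exists x, E x) -> (forall x, E x -> 0 <= x) ->
  (forall x, E x -> inf E <= x) /\ (forall eps, 0 < eps -> exists2 e, E e & e < inf E + eps).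
Proof.
move=> [x0 Ex0] pos.
have hl : has_lbound E by exists 0 => y /pos.
have hi : has_inf E by split => //; exists x0.
split; first by move=> x Ex; apply: (ge_inf hl).
by move=> eps he; apply: inf_adherent.
Qed.

Section Ryu.
Variables (R : realType) (X : completeNormedModType R) (ip : X -> X -> R).
Hypothesis hip : inner_product ip.
Variables (U V W : set X) (PU PV PW PZ : X -> X) (lam : R).
Hypotheses (hU : closed_subspace U) (hV : closed_subspace V) (hW : closed_subspace W).
Hypotheses (oU : orth_proj ip U PU) (oV : orth_proj ip V PV) (oW : orth_proj ip W PW)
  (oZ : orth_proj ip (U `&` V `&` W) PZ).
Hypotheses (hl0 : 0 < lam) (hl1 : lam < 1).

Lemma hZ : closed_subspace (U `&` V `&` W).
Proof.
case: hU => cU U0 UL; case: hV => cV V0 VL; case: hW => cW W0 WL.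
split; first by apply: closedI => //; apply: closedI.
  by [].
by move=> a x y [[? ?] ?] [[? ?] ?]; split; [split|]; auto.
Qed.

Let ipE := @ipE _ _ _ hip.
Let ip_ext := @ip_ext _ _ _ hip.

Definition M z := ryuM PU PV PW z.
Definition T z := ryuT PU PV PW z.
Definition Sop (z : X * X) : X * X :=
  ((1 - lam) *: z.1 + lam *: (T z).1, (1 - lam) *: z.2 + lam *: (T z).2).
Definition sq w k := ryu_seq PU PV PW lam w k.

Lemma sqS w k : sq w k.+1 = Sop (sq w k). Proof. by []. Qed.
Lemma sq0 w : sq w 0 = w. Proof. by []. Qed.
Lemma sq_shift w k : sq (Sop w) k = sq w k.+1.
Proof. by elim: k => [//|k IH]; rewrite sqS IH. Qed.

Let PUL := PL hip hU oU.
Let PVL := PL hip hV oV.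
Let PWL := PL hip hW oW.
Let PZL := PL hip hZ oZ.
Let PUD := PD hip hU oU.
Let PVD := PD hip hV oV.
Let PWD := PD hip hW oW.
Let PZD := PD hip hZ oZ.

Lemma M_lin a z w : M (a *: z + w) = a *: M z + M w.
Proof.
case: z => x y; case: w => x' y'.
rewrite /M /ryuM /=.
rewrite ?PUL ?PVL ?PWL ?PVD ?PWD ?PVL ?PWL.
congr (_, _, _); apply: ip_ext => t; rewrite !ipE; ring.
Qed.

Lemma T1 z : (T z).1 = z.1 + ((M z).2 - (M z).1.1). Proof. by []. Qed.
Lemma T2 z : (T z).2 = z.2 + ((M z).2 - (M z).1.2). Proof. by []. Qed.

Lemma Sop_lin a z w : Sop (a *: z + w) = a *: Sop z + Sop w.
Proof.
rewrite /Sop. rewrite !T1 !T2 M_lin /=.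
congr (_, _); apply: ip_ext => t; rewrite !ipE; ring.
Qed.

Lemma sq_lin a z w k : sq (a *: z + w) k = a *: sq z k + sq w k.
Proof. by elim: k => [//|k IH]; rewrite !sqS IH Sop_lin. Qed.

Lemma M_add z w : M (z + w) = M z + M w.
Proof. by have := M_lin 1 z w; rewrite !scale1r. Qed.
Lemma sq_add z w k : sq (z + w) k = sq z k + sq w k.
Proof. by have := sq_lin 1 z w k; rewrite !scale1r. Qed.
Lemma Sop_add z w : Sop (z + w) = Sop z + Sop w.
Proof. by have := Sop_lin 1 z w; rewrite !scale1r. Qed.

Let PUB := PB hip hU oU.
Let PVB := PB hip hV oV.
Let PWB := PB hip hW oW.
Let PZB := PB hip hZ oZ.
Let PWN := PN hip hW oW.
Let PZsc := PSc hip hZ oZ.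
Let PZN := PN hip hZ oZ.
Let ipC := ipC hip.

Definition qp (z : X * X) := ip z.1 z.1 + ip z.2 z.2.
Definition ipp (z w : X * X) := ip z.1 w.1 + ip z.2 w.2.
Definition Nn (z : X * X) := `|z.1| + `|z.2|.

Lemma Mb z : (M z).1.2 = PV ((M z).1.1 + z.2).
Proof. by rewrite PVD. Qed.
Lemma Mc z : (M z).2 = PW ((M z).1.1 - z.1 + (M z).1.2 - z.2).
Proof.
case: z => x y; rewrite /M /ryuM /= !PWB !PWD PWN.
apply: ip_ext => t; rewrite !ipE; ring.
Qed.

Lemma alg x y a b c : ip (x - a) a = 0 -> ip (a + y - b) b = 0 ->
  ip (a - x + b - y - c) c = 0 ->
  ip x x + ip y y - (ip (x + (c - a)) (x + (c - a)) + ip (y + (c - b)) (y + (c - b)))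
  = ip (a - b) (a - b).
Proof.
move=> h1 h2 h3; rewrite !ipE in h1 h2 h3 *.
have := ipC x y; have := ipC x a; have := ipC x b; have := ipC x c.
have := ipC y a; have := ipC y b; have := ipC y c.
have := ipC a b; have := ipC a c; have := ipC b c.
lra.
Qed.

Lemma Tnorm z : qp z - qp (T z) =
  ip ((M z).1.1 - (M z).1.2) ((M z).1.1 - (M z).1.2).
Proof.
rewrite /qp T1 T2; apply: alg.
- exact: (Porth oU z.1 (Pin oU _)).
- rewrite Mb; exact: (Porth oV _ (Pin oV _)).
- rewrite Mc; exact: (Porth oW _ (Pin oW _)).
Qed.

Lemma alg2 x d l : ip ((1 - l) *: x + l *: (x + d)) ((1 - l) *: x + l *: (x + d))
  = ip x x + 2 * l * ip x d + l ^+ 2 * ip d d.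
Proof. rewrite !ipE (ipC d x); ring. Qed.
Lemma alg3 x d : ip (x + d) (x + d) = ip x x + 2 * ip x d + ip d d.
Proof. rewrite !ipE (ipC d x); ring. Qed.

Lemma Snorm z : qp (Sop z) = qp z
  - lam * ip ((M z).1.1 - (M z).1.2) ((M z).1.1 - (M z).1.2)
  - lam * (1 - lam) * (ip ((M z).2 - (M z).1.1) ((M z).2 - (M z).1.1)
                      + ip ((M z).2 - (M z).1.2) ((M z).2 - (M z).1.2)).
Proof.
rewrite -Tnorm /qp /Sop /= ?T1 ?T2. rewrite !alg2 !alg3; ring.
Qed.

Lemma Sdec z : qp (Sop z) <= qp z.
Proof.
rewrite Snorm.
have h1 := ip_ge0 hip ((M z).1.1 - (M z).1.2).
have h2 := ip_ge0 hip ((M z).2 - (M z).1.1).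
have h3 := ip_ge0 hip ((M z).2 - (M z).1.2).
have h4 : 0 <= lam * (1 - lam) by apply: mulr_ge0; [apply: ltW | rewrite subr_ge0; apply: ltW].
have h5 : 0 <= lam * (1 - lam) * (ip ((M z).2 - (M z).1.1) ((M z).2 - (M z).1.1)
                      + ip ((M z).2 - (M z).1.2) ((M z).2 - (M z).1.2)).
  by apply: mulr_ge0 => //; apply: addr_ge0.
have h6 : 0 <= lam * ip ((M z).1.1 - (M z).1.2) ((M z).1.1 - (M z).1.2).
  by apply: mulr_ge0 => //; apply: ltW.
lra.
Qed.

Lemma Sgap z : lam * (1 - lam) * (ip ((M z).2 - (M z).1.1) ((M z).2 - (M z).1.1)
                      + ip ((M z).2 - (M z).1.2) ((M z).2 - (M z).1.2))
   <= qp z - qp (Sop z).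
Proof.
rewrite Snorm.
have h1 := ip_ge0 hip ((M z).1.1 - (M z).1.2).
have h6 : 0 <= lam * ip ((M z).1.1 - (M z).1.2) ((M z).1.1 - (M z).1.2).
  by apply: mulr_ge0 => //; apply: ltW.
lra.
Qed.

Lemma qp_ge0 z : 0 <= qp z.
Proof. by rewrite /qp; apply: addr_ge0; apply: ip_ge0. Qed.

Lemma sq_dec w j k : (j <= k)%N -> qp (sq w k) <= qp (sq w j).
Proof.
move=> /subnK <-; elim: (k - j)%N => [|n IH]; first by rewrite add0n.
by rewrite addSn sqS; apply: le_trans (Sdec _) IH.
Qed.

Lemma lam_pos : 0 < lam * (1 - lam).
Proof. by apply: mulr_gt0 => //; rewrite subr_gt0. Qed.

Lemma asym w (e : R) : 0 < e -> exists N, forall k, (N <= k)%N ->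
  `|(M (sq w k)).2 - (M (sq w k)).1.1| < e /\ `|(M (sq w k)).2 - (M (sq w k)).1.2| < e.
Proof.
move=> he.
pose g k := qp (sq w k).
have pos : forall x, range g x -> 0 <= x by move=> x [k _ <-]; apply: qp_ge0.
have ne : exists x, range g x by exists (g 0%N), 0%N.
have [lb adh] := inf_facts ne pos.
have heps : 0 < lam * (1 - lam) * e ^+ 2 by apply: mulr_gt0; [exact: lam_pos | exact: exprn_gt0].
have [e0 [N _ <-] hN] := adh _ heps.
exists N => k hk.
have h1 : g k <= g N by apply: sq_dec.
have h2 : inf (range g) <= g k.+1 by apply: lb; exists k.+1.
have h3 := Sgap (sq w k).
rewrite -sqS in h3.
have h4 : lam * (1 - lam) *
    (ip ((M (sq w k)).2 - (M (sq w k)).1.1) ((M (sq w k)).2 - (M (sq w k)).1.1) +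
     ip ((M (sq w k)).2 - (M (sq w k)).1.2) ((M (sq w k)).2 - (M (sq w k)).1.2))
    < lam * (1 - lam) * e ^+ 2.
  rewrite /g in h1 h2 hN; lra.
rewrite ltr_pM2l ?lam_pos // !(ipn hip) in h4.
have g1 := sqr_ge0 `|(M (sq w k)).2 - (M (sq w k)).1.1|.
have g2 := sqr_ge0 `|(M (sq w k)).2 - (M (sq w k)).1.2|.
split; rewrite -ltr_sqr ?nnegrE ?normr_ge0 ?(ltW he) //; lra.
Qed.

Lemma sq_bound w k : `|(sq w k).1| <= Nn w /\ `|(sq w k).2| <= Nn w.
Proof.
have h := sq_dec w (leq0n k); rewrite sq0 /qp !(ipn hip) in h.
have n1 := normr_ge0 (sq w k).1; have n2 := normr_ge0 (sq w k).2.
have n3 := normr_ge0 w.1; have n4 := normr_ge0 w.2.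
have hN : 0 <= Nn w by rewrite /Nn; apply: addr_ge0.
split; rewrite -ler_sqr ?nnegrE //; rewrite /Nn; nra.
Qed.

Let PUn := Pnorm hip oU.
Let PVn := Pnorm hip oV.
Let PWn := Pnorm hip oW.
Let PZn := Pnorm hip oZ.

Lemma M_bound z : `|(M z).1.1| <= Nn z /\ `|(M z).1.2| <= Nn z /\ `|(M z).2| <= 3 * Nn z.
Proof.
have ha : `|(M z).1.1| <= `|z.1| by apply: PUn.
have n1 := normr_ge0 z.1; have n2 := normr_ge0 z.2.
have hb : `|(M z).1.2| <= `|z.1| + `|z.2|.
  rewrite Mb; apply: le_trans (PVn _) _; apply: le_trans (ler_normD _ _) _; lra.
split; first by rewrite /Nn; lra.
split; first by [].
rewrite Mc; apply: le_trans (PWn _) _.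
apply: le_trans (ler_normB _ _) _.
have := ler_normD ((M z).1.1 - z.1) (M z).1.2.
have := ler_normB (M z).1.1 z.1.
rewrite /Nn; lra.
Qed.

Definition E k w := `|(M (sq w k)).1.1 - PZ w.1| + `|(M (sq w k)).1.2 - PZ w.1|
  + `|(M (sq w k)).2 - PZ w.1|.

Lemma E_bound k w : E k w <= 13 * Nn w.
Proof.
have [s1 s2] := sq_bound w k.
have [m1 [m2 m3]] := M_bound (sq w k).
have pz : `|PZ w.1| <= Nn w.
  apply: le_trans (PZn _) _; rewrite /Nn lerDl; exact: normr_ge0.
rewrite /Nn in s1 s2 m1 m2 m3 pz *.
have := ler_normB (M (sq w k)).1.1 (PZ w.1).
have := ler_normB (M (sq w k)).1.2 (PZ w.1).
have := ler_normB (M (sq w k)).2 (PZ w.1).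
rewrite /E /Nn; lra.
Qed.

Lemma E_add k w w' : E k (w + w') <= E k w + E k w'.
Proof.
rewrite /E sq_add M_add /= PZD.
have t (a a' p p' : X) : `|a + a' - (p + p')| <= `|a - p| + `|a' - p'|.
  have -> : a + a' - (p + p') = (a - p) + (a' - p') by rewrite opprD addrACA.
  exact: ler_normD.
have := t (M (sq w k)).1.1 (M (sq w' k)).1.1 (PZ w.1) (PZ w'.1).
have := t (M (sq w k)).1.2 (M (sq w' k)).1.2 (PZ w.1) (PZ w'.1).
have := t (M (sq w k)).2 (M (sq w' k)).2 (PZ w.1) (PZ w'.1).
lra.
Qed.

Definition good w := forall e : R, 0 < e -> exists N, forall k, (N <= k)%N -> E k w < e.

Lemma good_add w w' : good w -> good w' -> good (w + w').
Proof.
move=> g1 g2 e he.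
have he2 : 0 < e / 2 by apply: divr_gt0.
have [N1 h1] := g1 _ he2; have [N2 h2] := g2 _ he2.
exists (maxn N1 N2) => k hk.
have := h1 k (leq_trans (leq_maxl _ _) hk); have := h2 k (leq_trans (leq_maxr _ _) hk).
have := E_add k w w'; lra.
Qed.

Lemma good_lim w : (forall eta : R, 0 < eta -> exists m, good m /\ Nn (w - m) < eta) -> good w.
Proof.
move=> h e he.
have he2 : 0 < e / 26 by apply: divr_gt0.
have [m [gm hm]] := h _ he2.
have [N hN] := gm _ (divr_gt0 he (ltr0Sn _ 1%N)).
exists N => k hk.
have := hN k hk.
have := E_add k m (w - m); rewrite [m + _]addrC subrK.
have := E_bound k (w - m).
lra.
Qed.

Definition Zs := U `&` V `&` W.
Definition Ks (k : X * X) := PU k.1 = 0 /\ PV k.2 = 0 /\ PW (k.1 + k.2) = 0.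

Let PUid := Pid hip hU oU.
Let PVid := Pid hip hV oV.
Let PWid := Pid hip hW oW.
Let PZid := Pid hip hZ oZ.
Let PU0 := P0 hip hU oU.
Let PV0 := P0 hip hV oV.
Let PW0 := P0 hip hW oW.
Let PZ0 := P0 hip hZ oZ.

Lemma MZ q : Zs q -> M (q, 0) = (q, q, q).
Proof.
move=> [[qU qV] qW].
rewrite /M /ryuM /= PUid // PVid // PWid // PV0 PW0 addr0.
congr (_, _, _); apply: ip_ext => t; rewrite !ipE; ring.
Qed.

Lemma sqZ q k : Zs q -> sq (q, 0) k = (q, 0).
Proof.
move=> hq; elim: k => [//|k IH]; rewrite sqS IH /Sop !T1 !T2 MZ //=.
congr (_, _); apply: ip_ext => t; rewrite !ipE; ring.
Qed.

Lemma good_Z q : Zs q -> good (q, 0).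
Proof.
move=> hq e he; exists 0%N => k _; rewrite /E sqZ // MZ //= PZid // subrr normr0.
by rewrite !addr0.
Qed.

Lemma MK k : Ks k -> M k = (0, 0, 0).
Proof.
case: k => u v [/= h1 [h2 h3]].
rewrite /M /ryuM /= h1 h2 PV0 PW0 addr0.
congr (_, _, _).
apply: ip_ext => t; rewrite PWD in h3; rewrite !ipE.
have : ip (PW u + PW v) t = 0 by rewrite h3 ipE.
rewrite !ipE; lra.
Qed.

Lemma sqK k n : Ks k -> sq k n = k.
Proof.
move=> hk; elim: n => [//|n IH]; rewrite sqS IH /Sop !T1 !T2 MK //=.
case: k hk {IH} => u v _ /=.
congr (_, _); apply: ip_ext => t; rewrite !ipE; ring.
Qed.

Let PZU x : PZ (PU x) = PZ x.
Proof. by apply: (Psub hip hU oU hZ oZ); move=> t [[]]. Qed.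
Let PZV x : PZ (PV x) = PZ x.
Proof. by apply: (Psub hip hV oV hZ oZ); move=> t [[]]. Qed.
Let PZW x : PZ (PW x) = PZ x.
Proof. by apply: (Psub hip hW oW hZ oZ); move=> t [[]]. Qed.

Lemma good_K k : Ks k -> good k.
Proof.
move=> hk e he; exists 0%N => n _; rewrite /E sqK // MK //=.
have -> : PZ k.1 = 0 by rewrite -PZU; case: hk => -> _; rewrite PZ0.
by rewrite subrr normr0 !addr0.
Qed.

Lemma Sdiff z : z - Sop z =
  (lam *: ((M z).1.1 - (M z).2), lam *: ((M z).1.2 - (M z).2)).
Proof.
rewrite /Sop T1 T2; case: z => x y /=.
congr (_, _); apply: ip_ext => t; rewrite !ipE; ring.
Qed.

Lemma PZ_Sdiff z : PZ ((z - Sop z).1) = 0.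
Proof.
have -> : (z - Sop z).1 = lam *: ((M z).1.1 - (M z).2) by rewrite Sdiff.
rewrite PZsc PZB Mc PZW Mb !PZB !PZD PZV PZD.
rewrite /M /ryuM /= !PZU PZN.
by apply: ip_ext => t; rewrite !ipE; ring.
Qed.

Lemma good_ran u : good (u - Sop u).
Proof.
move=> e he.
have he' : 0 < e / 11 by apply: divr_gt0.
have [N hN] := asym u he'.
exists N => k hk.
have e1 : sq (u - Sop u) k = sq u k - Sop (sq u k).
  have := sq_lin (-1) (Sop u) u k.
  rewrite !scaleN1r sq_shift sqS => h.
  by rewrite addrC h addrC.
rewrite /E PZ_Sdiff subr0 subr0 subr0 e1.
have [m1 [m2 m3]] := M_bound (sq u k - Sop (sq u k)).
have [a1 a2] := hN k hk.
have hd : Nn (sq u k - Sop (sq u k)) = lam * `|(M (sq u k)).2 - (M (sq u k)).1.1|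
   + lam * `|(M (sq u k)).2 - (M (sq u k)).1.2|.
  by rewrite Sdiff /Nn /= !normrZ (gtr0_norm hl0) (distrC (M (sq u k)).1.1) (distrC (M (sq u k)).1.2).
have hl1' : lam <= 1 by apply: ltW.
have b1 : lam * `|(M (sq u k)).2 - (M (sq u k)).1.1| <= e / 11.
  apply: le_trans (ltW a1); rewrite ler_piMl //; exact: normr_ge0.
have b2 : lam * `|(M (sq u k)).2 - (M (sq u k)).1.2| <= e / 11.
  apply: le_trans (ltW a2); rewrite ler_piMl //; exact: normr_ge0.
lra.
Qed.

Lemma pair_ext (z w : X * X) : z.1 = w.1 -> z.2 = w.2 -> z = w.
Proof. by case: z; case: w => ? ? ? ? /= -> ->. Qed.

Lemma Sop0 : Sop 0 = 0.
Proof.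
have := Sop_add 0 0; rewrite addr0 => h.
apply: pair_ext => /=.
  have h1 := congr1 fst h; apply: ip_ext => t; have := congr1 (fun v => ip v t) h1.
  by rewrite /= !ipE; lra.
have h1 := congr1 snd h; apply: ip_ext => t; have := congr1 (fun v => ip v t) h1.
by rewrite /= !ipE; lra.
Qed.

Arguments M : simpl never.
Arguments Sop : simpl never.
Arguments T : simpl never.

Definition Ls (l : X * X) := exists u k q, Ks k /\ Zs q /\ l = (u - Sop u) + k + (q, 0).

Lemma Ks0 : Ks 0. Proof. by rewrite /Ks /= addr0 PU0 PV0 PW0. Qed.
Lemma Zs0 : Zs 0. Proof. exact: (S0 hZ). Qed.

Lemma Ls0 : Ls 0.
Proof.
exists 0, 0, 0; split; first exact: Ks0; split; first exact: Zs0.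
by rewrite Sop0 subrr !add0r.
Qed.

Lemma Ls_comb m l t : Ls m -> Ls l -> Ls (m + t *: l).
Proof.
move=> [u [k [q [hk [hq ->]]]]] [u' [k' [q' [hk' [hq' ->]]]]].
exists (t *: u' + u), (t *: k' + k), (t *: q' + q); split.
  case: hk => [h1 [h2 h3]]; case: hk' => [h1' [h2' h3']].
  rewrite /Ks /= PUL PVL h1 h2 h1' h2' scaler0 add0r; split => //; split => //.
  have -> : t *: k'.1 + k.1 + (t *: k'.2 + k.2) = t *: (k'.1 + k'.2) + (k.1 + k.2).
    by apply: ip_ext => s; rewrite !ipE; ring.
  by rewrite PWL h3 h3' scaler0 add0r.
split; first by apply: (SL hZ).
rewrite Sop_lin; apply: pair_ext => /=; apply: ip_ext => s; rewrite !ipE; ring.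
Qed.

Lemma Ls_good l : Ls l -> good l.
Proof.
move=> [u [k [q [hk [hq ->]]]]].
apply: good_add; last exact: good_Z.
apply: good_add; first exact: good_ran.
exact: good_K.
Qed.

Lemma perp e : (forall l, Ls l -> ipp e l = 0) -> e = 0.
Proof.
move=> H.
have h1 : ipp e (e - Sop e) = 0.
  apply: H; exists e, 0, 0; split; first exact: Ks0; split; first exact: Zs0.
  by rewrite !addr0.
have eq1 : (e - Sop e).1 = lam *: ((M e).1.1 - (M e).2) by rewrite Sdiff.
have eq2 : (e - Sop e).2 = lam *: ((M e).1.2 - (M e).2) by rewrite Sdiff.
rewrite /ipp eq1 eq2 !(ipZr hip) -mulrDr in h1.
have h1' : ip e.1 ((M e).1.1 - (M e).2) + ip e.2 ((M e).1.2 - (M e).2) = 0.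
  by move/eqP: h1; rewrite mulf_eq0 gt_eqF //= => /eqP.
have h2 := Tnorm e.
rewrite /qp T1 T2 (alg3 e.1 ((M e).2 - (M e).1.1)) (alg3 e.2 ((M e).2 - (M e).1.2)) in h2.
have g0 := ip_ge0 hip ((M e).1.1 - (M e).1.2).
have g1 := ip_ge0 hip ((M e).2 - (M e).1.1).
have g2 := ip_ge0 hip ((M e).2 - (M e).1.2).
have k1 : ip e.1 ((M e).2 - (M e).1.1) = - ip e.1 ((M e).1.1 - (M e).2).
  by rewrite !ipE; ring.
have k2 : ip e.2 ((M e).2 - (M e).1.2) = - ip e.2 ((M e).1.2 - (M e).2).
  by rewrite !ipE; ring.
have ca : (M e).2 - (M e).1.1 = 0 by apply: (ip_le0 hip); lra.
have cb : (M e).2 - (M e).1.2 = 0 by apply: (ip_le0 hip); lra.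
move/eqP: ca; rewrite subr_eq0 => /eqP ca.
move/eqP: cb; rewrite subr_eq0 => /eqP cb.
set p := (M e).1.1 in ca cb.
have pU : U p by apply: (Pin oU).
have pV : V p by rewrite -ca cb Mb; apply: (Pin oV).
have pW : W p by rewrite -ca Mc; apply: (Pin oW).
have h3 : ipp e (p, 0) = 0.
  apply: H; exists 0, 0, p; split; first exact: Ks0; split; first by [].
  by rewrite Sop0 subrr !add0r.
rewrite /ipp /= !ipE addr0 in h3.
have h4 : ip (e.1 - PU e.1) p = 0 by apply: (Porth oU).
have p0 : p = 0.
  rewrite !ipE in h4; apply: (ip_eq0 hip); lra.
have hK : Ks e.
  have ha : PU e.1 = 0 by rewrite -p0.
  have hb : (M e).1.2 = 0 by rewrite -cb ca.
  have hc : (M e).2 = 0 by rewrite ca.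
  rewrite /Ks ha; split => //.
  move: hb hc; rewrite /M /ryuM /= ha PV0 add0r => -> hc; split => //.
  rewrite PWD; apply: ip_ext => t; have := congr1 (fun v => ip v t) hc.
  rewrite /= PW0 !ipE; lra.
have h5 : ipp e e = 0.
  apply: H; exists 0, e, 0; split; first exact: hK; split; first exact: Zs0.
  by rewrite Sop0 subrr add0r addr0.
rewrite /ipp in h5.
have q1 := ip_ge0 hip e.1; have q2 := ip_ge0 hip e.2.
apply: pair_ext => /=; apply: (ip_eq0 hip); lra.
Qed.

Lemma para2 (w m m' : X * X) : qp (m - m') + 4 * qp (w - (m + 2^-1 *: (m' + (-1) *: m)))
  = 2 * qp (w - m) + 2 * qp (w - m').
Proof.
rewrite /qp /= !ipE.
have := ipC w.1 m.1; have := ipC w.1 m'.1; have := ipC m.1 m'.1.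
have := ipC w.2 m.2; have := ipC w.2 m'.2; have := ipC m.2 m'.2.
lra.
Qed.

Lemma qp_shift (w m l : X * X) t : qp (w - (m + t *: l)) =
  qp (w - m) - 2 * t * ipp (w - m) l + t ^+ 2 * qp l.
Proof.
rewrite /qp /ipp /= !ipE.
rewrite (ipC l.1 w.1) (ipC l.1 m.1) (ipC l.2 w.2) (ipC l.2 m.2); ring.
Qed.

Lemma ipp_split (w m l : X * X) : ipp w l = ipp (w - m) l + ipp m l.
Proof. rewrite /ipp /= !ipE; ring. Qed.

Lemma ipp_bound (h l : X * X) : `|ipp h l| <= `|h.1| * `|l.1| + `|h.2| * `|l.2|.
Proof.
rewrite /ipp; apply: le_trans (ler_normD _ _) _.
by apply: lerD; apply: ipCS2.
Qed.

Lemma comp_cauchy (f : nat -> X * X) (g : X * X -> X) :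
  (forall z, `|g z| ^+ 2 <= qp z) -> (forall a b, g (a - b) = g a - g b) ->
  (forall n k, qp (f n - f k) <= 2 * ivn R n + 2 * ivn R k) ->
  exists l : X, (fun n => g (f n)) @ \oo --> l.
Proof.
move=> hg gB cau; apply: complete_seq => e he.
have he2 : 0 < e ^+ 2 / 4 by apply: divr_gt0; [exact: exprn_gt0|].
have [N hN] := small_inv he2.
exists N => n hn.
have h3 := cau n N; have h4 := hg (f n - f N); rewrite gB in h4.
have h1 := hN n hn; have h2 := hN N (leqnn N). rewrite -ltr_sqr ?nnegrE ?normr_ge0 ?(ltW he) //; lra.
Qed.

Lemma dense (L : X * X -> Prop) : L 0 -> (forall m l t, L m -> L l -> L (m + t *: l)) ->
  (forall e, (forall l, L l -> ipp e l = 0) -> e = 0) ->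
  forall w0 (eta : R), 0 < eta -> exists m, L m /\ qp (w0 - m) < eta.
Proof.
move=> L0 Lc Lp w0 eta heta.
pose D := [set r | exists m, L m /\ r = qp (w0 - m)].
have ne : exists x, D x by exists (qp (w0 - 0)), 0.
have pos : forall x, D x -> 0 <= x by move=> x [m [_ ->]]; apply: qp_ge0.
have [lb adh] := inf_facts ne pos.
set d := inf D in lb adh.
have lbL : forall m, L m -> d <= qp (w0 - m) by move=> m Lm; apply: lb; exists m.
have : forall n : nat, exists m, L m /\ qp (w0 - m) < d + ivn R n.
  move=> n; have [r [m [Lm ->]] hr] := adh _ (ivn_gt0 R n).
  by exists m.
move=> /choice [f hf].
have Lf n : L (f n) by case: (hf n).
have df n : qp (w0 - f n) < d + ivn R n by case: (hf n).
have cau : forall n k, qp (f n - f k) <= 2 * ivn R n + 2 * ivn R k.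
  move=> n k.
  have Lmid : L (f n + 2^-1 *: (f k + (-1) *: f n)) by apply: (Lc) => //; apply: (Lc).
  have := lbL _ Lmid; have := para2 w0 (f n) (f k); have := df n; have := df k.
  lra.
have [l1 cl1] : exists l : X, (fun n => (f n).1) @ \oo --> l.
  apply: comp_cauchy => // z; rewrite /qp -(ipn hip); have := ip_ge0 hip z.2; lra.
have [l2 cl2] : exists l : X, (fun n => (f n).2) @ \oo --> l.
  apply: comp_cauchy => // z; rewrite /qp -(ipn hip); have := ip_ge0 hip z.1; lra.
rewrite cvg_ex_e in cl1; rewrite cvg_ex_e in cl2.
set ms : X * X := (l1, l2).
have orth : forall l, L l -> ipp (w0 - ms) l = 0.
  move=> l Ll.
  set g := ipp (w0 - ms) l.
  have Q0 := qp_ge0 l.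
  have stepA : forall t dl, 0 < dl -> 2 * t * g <= t ^+ 2 * qp l + dl.
    move=> t dl hdl.
    set B := `|l.1| + `|l.2|.
    have hB : 0 <= B by rewrite /B; apply: addr_ge0; apply: normr_ge0.
    have hK : 0 < 2 * `|t| * B + 1.
      by apply: ltr_wpDl => //; apply: mulr_ge0 => //; apply: mulr_ge0.
    set eta' := dl / (2 * (2 * `|t| * B + 1)).
    have heta' : 0 < eta' by apply: divr_gt0 => //; apply: mulr_gt0.
    have eeta : eta' * (2 * `|t| * B + 1) = dl / 2.
      rewrite /eta' invfM mulrA -mulrA mulVf ?gt_eqF // mulr1 mulrC //.
    have [N1 hN1] := small_inv (divr_gt0 hdl (ltr0Sn _ 1%N) : 0 < dl / 2).
    have [N2 hN2] := cl1 _ heta'.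
    have [N3 hN3] := cl2 _ heta'.
    set n := maxn N1 (maxn N2 N3).
    have i1 := hN1 n (leq_maxl _ _).
    have i2 := hN2 n (leq_trans (leq_maxl _ _) (leq_maxr _ _)).
    have i3 := hN3 n (leq_trans (leq_maxr _ _) (leq_maxr _ _)).
    have L1 := lbL _ (Lc _ _ t (Lf n) Ll).
    rewrite qp_shift (ipp_split (w0 - f n) (w0 - ms)) in L1.
    have hsplit : w0 - f n - (w0 - ms) = ms - f n.
      by apply: pair_ext => /=; apply: ip_ext => s; rewrite !ipE; ring.
    rewrite hsplit -/g in L1.
    have hb := ipp_bound (ms - f n) l.
    rewrite /= (distrC l1) (distrC l2) in hb.
    set r := ipp (ms - f n) l in L1 hb.
    have hr : `|r| <= eta' * B.
      apply: le_trans hb _; rewrite /B mulrDr.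
      apply: lerD; (apply: ler_wpM2r; first exact: normr_ge0); [exact: ltW i2 | exact: ltW i3].
    have htr : - (2 * t * r) <= dl / 2.
      have e1 : - (2 * t * r) <= 2 * (`|t| * `|r|).
        have := ler_norm (- (2 * t * r)); rewrite normrN !normrM normr_nat; lra.
      apply: le_trans e1 _; rewrite -eeta.
      have ht := normr_ge0 t.
      have : `|t| * `|r| <= `|t| * (eta' * B) by apply: ler_wpM2l.
      have : 0 <= eta' by apply: ltW.
      nra.
    have := df n; lra.
  have stepB : forall t, 2 * t * g <= t ^+ 2 * qp l.
    move=> t; case: (leP (2 * t * g) (t ^+ 2 * qp l)) => // h.
    have := stepA t ((2 * t * g - t ^+ 2 * qp l) / 2) (divr_gt0 _ _).
    rewrite subr_gt0 => /(_ h (ltr0Sn _ 1%N)); lra.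
  set s := (qp l + 1)^-1.
  have hs : 0 < s by rewrite invr_gt0; lra.
  have hsQ : s * (qp l + 1) = 1 by rewrite mulVf // gt_eqF //; lra.
  have := stepB (g * s).
  have -> : (g * s) ^+ 2 * qp l = g ^+ 2 * s * (s * qp l) by ring.
  have -> : s * qp l = 1 - s by rewrite -hsQ; ring.
  move=> h.
  have hg2 : g ^+ 2 <= 0.
    have : g ^+ 2 * (s * (1 + s)) <= 0 by lra.
    have : 0 < s * (1 + s) by apply: mulr_gt0 => //; lra.
    nra.
  apply/eqP; rewrite -sqrf_eq0; apply/eqP; apply: le_anti; rewrite hg2 sqr_ge0 //.
have e0 := Lp _ orth.
have w1 : w0.1 = l1.
  by have := congr1 fst e0 => /= /eqP; rewrite subr_eq0 => /eqP.
have w2 : w0.2 = l2.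
  by have := congr1 snd e0 => /= /eqP; rewrite subr_eq0 => /eqP.
have he4 : 0 < eta / 4 by apply: divr_gt0.
have [N1 h1] := cl1 _ ltr01.
have [N2 h2] := cl1 _ he4.
have [N3 h3] := cl2 _ ltr01.
have [N4 h4] := cl2 _ he4.
set n := maxn (maxn N1 N2) (maxn N3 N4).
exists (f n); split; first exact: Lf.
have a1 := h1 n (leq_trans (leq_maxl _ _) (leq_maxl _ _)).
have a2 := h2 n (leq_trans (leq_maxr _ _) (leq_maxl _ _)).
have a3 := h3 n (leq_trans (leq_maxl _ _) (leq_maxr _ _)).
have a4 := h4 n (leq_trans (leq_maxr _ _) (leq_maxr _ _)).
rewrite /qp !(ipn hip) /= w1 w2 (distrC l1) (distrC l2).
have := normr_ge0 ((f n).1 - l1); have := normr_ge0 ((f n).2 - l2).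
nra.
Qed.

Lemma good_all w : good w.
Proof.
apply: good_lim => eta heta.
have heta2 : 0 < eta ^+ 2 / 2 by apply: divr_gt0 => //; apply: exprn_gt0.
have [m [Lm hm]] := dense Ls0 Ls_comb perp w heta2.
exists m; split; first exact: Ls_good.
rewrite /qp !(ipn hip) in hm.
have n1 := normr_ge0 (w - m).1; have n2 := normr_ge0 (w - m).2.
rewrite /Nn -ltr_sqr ?nnegrE ?(ltW heta) ?addr_ge0 //.
have := sqr_ge0 (`|(w - m).1| - `|(w - m).2|). nra.
Qed.

End Ryu.



End P2.
Import P2.

Unset Implicit Arguments.
Set Strict Implicit.

Theorem mainTheorem1 (R : realType) (X : completeNormedModType R)
  (ip : X -> X -> R) (U V W : set X) (PU PV PW PZ : X -> X)
  (lam : R) (x0 y0 : X) :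
  inner_product ip ->
  closed_subspace U -> closed_subspace V -> closed_subspace W ->
  orth_proj ip U PU -> orth_proj ip V PV -> orth_proj ip W PW ->
  orth_proj ip (U `&` V `&` W) PZ ->
  0 < lam -> lam < 1 ->
  let z := ryu_seq PU PV PW lam (x0, y0) in
  [/\ (fun k => (ryuM PU PV PW (z k)).1.1) @ \oo --> PZ x0,
      (fun k => (ryuM PU PV PW (z k)).1.2) @ \oo --> PZ x0 &
      (fun k => (ryuM PU PV PW (z k)).2) @ \oo --> PZ x0].
Proof.
move=> hip hU hV hW oU oV oW oZ hl0 hl1 z.
have g := good_all hip hU hV hW oU oV oW oZ hl0 hl1 (x0, y0).
have key : forall e : R, 0 < e -> exists N, forall k, (N <= k)%N ->
   [/\ `|(ryuM PU PV PW (z k)).1.1 - PZ x0| < e,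
       `|(ryuM PU PV PW (z k)).1.2 - PZ x0| < e &
       `|(ryuM PU PV PW (z k)).2 - PZ x0| < e].
  move=> e he; have [N hN] := g e he; exists N => k hk.
  move: (hN k hk); rewrite /E /M /sq /z => h.
  change ((x0, y0).1) with x0 in h.
  have := normr_ge0 ((ryuM PU PV PW (ryu_seq PU PV PW lam (x0, y0) k)).1.1 - PZ x0).
  have := normr_ge0 ((ryuM PU PV PW (ryu_seq PU PV PW lam (x0, y0) k)).1.2 - PZ x0).
  have := normr_ge0 ((ryuM PU PV PW (ryu_seq PU PV PW lam (x0, y0) k)).2 - PZ x0).
  move=> *; split; lra.
split; apply/cvg_ex_e => e he; have [N hN] := key e he; exists N => k hk;
  by case: (hN k hk).
Qed.
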